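(* Let $L\subset\mathbb{R}^{12}$ be a $12$-dimensional lattice and $P_0$ a Delaunay polytope of $L$ with $14$ vertices, whose vertex set $V$ is the disjoint union of four sets $V(\Sigma_1^2),V(\Sigma_2^2)$ (each of size $3$) and $V(\Sigma_1^3),V(\Sigma_2^3)$ (each of size $4$), such that the squared Euclidean distances $d(u,v)=\|u-v\|^2$ between distinct vertices are: $d(u,v)=7$ if $u,v$ lie in the same set $V(\Sigma_i^q)$; $d(u,v)=6$ if $u\in V(\Sigma_i^2)$, $v\in V(\Sigma_i^3)$, $i=1,2$; $d(u,v)=10$ if $u\in V(\Sigma_1^2)$, $v\in V(\Sigma_2^2)$; $d(u,v)=12$ if $u\in V(\Sigma_1^3), v\in V(\Sigma_2^3)$, or $u\in V(\Sigma_1^2), v\in V(\Sigma_2^3)$, or $u\in V(\Sigma_2^2), v\in V(\Sigma_1^3)$. Then: (i) for every $u\in V$, the set $V\setminus\{u\}$ is an $\mathbb{R}$-affine basis of $P_0$; (ii) the $\mathbb{Z}$-module of integral affine dependencies $Y(P_0)=\{y\in\mathbb{Z}^V:\sum_v y(v)v=0,\ \sum_v y(v)=0\}$ is $y\mathbb{Z}$, where $y(v)=3$ on $V(\Sigma_1^2)$, $-3$ on $V(\Sigma_2^2)$, $2$ on $V(\Sigma_2^3)$, $-2$ on $V(\Sigma_1^3)$; (iii) $P_0$ is not $\mathbb{Z}$-basic; (iv) the rank of $P_0$ is $77$.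
   Context: A Delaunay polytope of a lattice $L\subset\mathbb{R}^n$ is a polytope whose vertex set is $L\cap S$, where $S=S(c,r)$ is an empty sphere: $\|a-c\|^2\ge r^2$ for all $a\in L$, and $S\cap L$ contains $n+1$ affinely independent points. For a ring $\mathbb{K}$, a subset $W\subseteq V(P)$ is $\mathbb{K}$-generating if every vertex $w\in V(P)$ can be written $w=\sum_{v\in W}z(v)v$ with $z(v)\in\mathbb{K}$ and $\sum_{v\in W}z(v)=1$; a $\mathbb{K}$-generating set of size $n+1$ is a $\mathbb{K}$-affine basis, and $P$ is $\mathbb{K}$-basic if it has a $\mathbb{K}$-affine basis. For a finite set $V$, the hypermetric cone $HYP(V)$ is the set of functions $d:V\times V\to\mathbb{R}$ with $d(u,v)=d(v,u)$, $d(v,v)=0$, and $\sum_{u,v\in V}b_ub_v d(u,v)\le 0$ for all $b\in\mathbb{Z}^V$ with $\sum_v b_v=1$. The rank of a Delaunay polytope $P$ is the dimension of the minimal face of $HYP(V(P))$ containing $d_P(u,v)=\|u-v\|^2$. *)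

(* Defs.v *)
From mathcomp Require Import all_boot all_order all_algebra.
From mathcomp Require Import reals Rstruct.
Set Implicit Arguments. Unset Strict Implicit. Unset Printing Implicit Defensive.
Import Order.TTheory GRing.Theory Num.Theory.
Local Open Scope ring_scope.

Notation RR := Rdefinitions.R.

Section Defs.
Variable R : realType.

Definition sqnorm n (x : 'rV[R]_n) : R := \sum_(i < n) x 0 i ^+ 2.

Definition is_lattice n (L : 'rV[R]_n -> Prop) : Prop :=
  exists B : 'M[R]_n, B \in unitmx /\
    forall x, L x <-> exists z : 'rV[int]_n, x = map_mx intr z *m B.

Definition aff_indep (V : lmodType R) k (w : 'I_k -> V) : Prop :=
  forall a : 'I_k -> R, \sum_(i < k) a i = 0 ->
    \sum_(i < k) a i *: w i = 0 -> forall i, a i = 0.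

(* The polytope whose vertex family is v : 'I_m -> 'rV_n (v injective) is a
   Delaunay polytope of L: there is an empty sphere S(c,r) with
   L \cap S = {v i} containing n+1 affinely independent points. *)
Definition is_delaunay n (L : 'rV[R]_n -> Prop) m (v : 'I_m -> 'rV[R]_n) : Prop :=
  injective v /\
  exists (c : 'rV[R]_n) (r : R),
    (forall a, L a -> r ^+ 2 <= sqnorm (a - c)) /\
    (forall a, (L a /\ sqnorm (a - c) = r ^+ 2) <-> exists i, a = v i) /\
    (exists w : 'I_n.+1 -> 'I_m, aff_indep (fun j => v (w j))).

Definition K_generating (K : pred R) n m (v : 'I_m -> 'rV[R]_n)
    (W : {set 'I_m}) : Prop :=
  forall j : 'I_m, exists z : 'I_m -> R,
    (forall i, z i \in K) /\ \sum_(i in W) z i = 1 /\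
    v j = \sum_(i in W) z i *: v i.

Definition K_affine_basis (K : pred R) n m (v : 'I_m -> 'rV[R]_n)
    (W : {set 'I_m}) : Prop :=
  K_generating K v W /\ #|W| = n.+1.

Definition K_basic (K : pred R) n m (v : 'I_m -> 'rV[R]_n) : Prop :=
  exists W, K_affine_basis K v W.

(* Hypermetric cone on the vertex index set 'I_m; functions V x V -> R are
   represented as m x m matrices. *)
Definition HYP m : 'M[R]_m -> Prop := fun d =>
  (forall u w, d u w = d w u) /\ (forall u, d u u = 0) /\
  forall b : 'I_m -> int, \sum_(u < m) b u = 1 ->
    \sum_(u < m) \sum_(w < m) (b u * b w)%:~R * d u w <= 0.

Definition convex_set (V : lmodType R) (C : V -> Prop) : Prop :=
  forall x y (t : R), C x -> C y -> 0 <= t <= 1 -> C (t *: x + (1 - t) *: y).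

Definition is_face (V : lmodType R) (C F : V -> Prop) : Prop :=
  convex_set F /\ (forall x, F x -> C x) /\
  forall x y (t : R), C x -> C y -> 0 < t < 1 ->
    F (t *: x + (1 - t) *: y) -> F x /\ F y.

Definition min_face (V : lmodType R) (C : V -> Prop) (p : V) : V -> Prop :=
  fun x => forall F, is_face C F -> F p -> F x.

Definition has_dim (V : lmodType R) (S : V -> Prop) (k : nat) : Prop :=
  (exists w : 'I_k.+1 -> V, (forall i, S (w i)) /\ aff_indep w) /\
  ~ (exists w : 'I_k.+2 -> V, (forall i, S (w i)) /\ aff_indep w).

Definition dist_mx n m (v : 'I_m -> 'rV[R]_n) : 'M[R]_m :=
  \matrix_(u, w) sqnorm (v u - v w).

Definition delaunay_rank n m (v : 'I_m -> 'rV[R]_n) (k : nat) : Prop :=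
  has_dim (min_face (@HYP m) (dist_mx v)) k.

End Defs.

(* Labelling of the 14 vertices: block 0 = V(Sigma_1^2) (indices 0..2),
   block 1 = V(Sigma_2^2) (3..5), block 2 = V(Sigma_1^3) (6..9),
   block 3 = V(Sigma_2^3) (10..13). *)
Definition blk (i : 'I_14) : nat :=
  if (i < 3)%N then 0 else if (i < 6)%N then 1 else if (i < 10)%N then 2 else 3.

Definition bdist (p q : nat) : nat :=
  if p == q then 7 else
  match minn p q, maxn p q with
  | 0, 2 | 1, 3 => 6
  | 0, 1 => 10
  | _, _ => 12   (* pairs {2,3}, {0,3}, {1,2} *)
  end%N.

Definition y0 (i : 'I_14) : int :=
  match blk i with 0%N => 3 | 1%N => -3 | 2%N => -2 | _ => 2 end.

(* Main.v *)
Require Import Defs.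
From mathcomp Require Import all_boot all_order all_algebra.
From mathcomp Require Import reals Rstruct.
From mathcomp Require Import ring lra zify.
Import Order.TTheory GRing.Theory Num.Theory.
Local Open Scope ring_scope.
Set Implicit Arguments. Unset Strict Implicit. Unset Printing Implicit Defensive.

Section Dot.
Variable R : realType.
Variable n : nat.
Implicit Types x y : 'rV[R]_n.

Definition dot x y : R := \sum_(i < n) x 0 i * y 0 i.

Lemma sqnormE x : sqnorm x = dot x x.
Proof. by apply: eq_bigr => i _; rewrite expr2. Qed.

Lemma dotC x y : dot x y = dot y x.
Proof. by apply: eq_bigr => i _; rewrite mulrC. Qed.

Lemma dot_sumL m (a : 'I_m -> R) (x : 'I_m -> 'rV[R]_n) y :
  dot (\sum_(u < m) a u *: x u) y = \sum_(u < m) a u * dot (x u) y.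
Proof.
rewrite /dot.
under eq_bigr => i _ do rewrite summxE mulr_suml.
rewrite exchange_big /=; apply: eq_bigr => u _.
rewrite mulr_sumr; apply: eq_bigr => i _; by rewrite mxE mulrA.
Qed.

Lemma dot_sumR m (a : 'I_m -> R) (x : 'I_m -> 'rV[R]_n) y :
  dot y (\sum_(u < m) a u *: x u) = \sum_(u < m) a u * dot y (x u).
Proof. rewrite dotC dot_sumL; apply: eq_bigr => u _; by rewrite dotC. Qed.

Lemma dotDl x y z : dot (x + y) z = dot x z + dot y z.
Proof. rewrite /dot -big_split /=; apply: eq_bigr => i _; by rewrite mxE mulrDl. Qed.
Lemma dotNl x z : dot (- x) z = - dot x z.
Proof. rewrite /dot -sumrN; apply: eq_bigr => i _; by rewrite mxE mulNr. Qed.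
Lemma dotBl x y z : dot (x - y) z = dot x z - dot y z.
Proof. by rewrite dotDl dotNl. Qed.
Lemma dotBr x y z : dot z (x - y) = dot z x - dot z y.
Proof. by rewrite dotC dotBl !(dotC z). Qed.

Lemma sqnormB x y : sqnorm (x - y) = sqnorm x + sqnorm y - 2 * dot x y.
Proof. rewrite !sqnormE dotBl !dotBr (dotC y x); ring. Qed.

Lemma sqnorm_ge0 x : 0 <= sqnorm x.
Proof. by apply: sumr_ge0 => i _; rewrite sqr_ge0. Qed.

Lemma sqnorm_eq0 x : sqnorm x = 0 -> x = 0.
Proof.
move=> /eqP; rewrite psumr_eq0; last by move=> i _; rewrite sqr_ge0.
move=> /allP H; apply/rowP => i; rewrite mxE.
have := H i (mem_index_enum i); rewrite sqrf_eq0 => /eqP //.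
Qed.

Lemma sqnormD_le x y : sqnorm (x + y) <= 2 * sqnorm x + 2 * sqnorm y.
Proof.
rewrite /sqnorm !mulr_sumr -big_split /=; apply: ler_sum => i _; rewrite mxE.
have := sqr_ge0 (x 0 i - y 0 i); nra.
Qed.

Lemma hypid m (b : 'I_m -> R) (x : 'I_m -> 'rV[R]_n) :
  \sum_(u < m) \sum_(w < m) b u * b w * sqnorm (x u - x w) =
  2 * (\sum_(u < m) b u) * (\sum_(u < m) b u * sqnorm (x u))
  - 2 * sqnorm (\sum_(u < m) b u *: x u).
Proof.
have E : sqnorm (\sum_(u < m) b u *: x u) =
   \sum_(u < m) \sum_(w < m) b u * (b w * dot (x u) (x w)).
  rewrite sqnormE dot_sumL; apply: eq_bigr => u _; by rewrite dot_sumR mulr_sumr.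
rewrite E.
have -> : \sum_(u < m) \sum_(w < m) b u * b w * sqnorm (x u - x w) =
  \sum_(u < m) \sum_(w < m) (b w * (b u * sqnorm (x u)) + b u * (b w * sqnorm (x w))
      - 2 * (b u * (b w * dot (x u) (x w)))).
  by apply: eq_bigr => u _; apply: eq_bigr => w _; rewrite sqnormB; ring.
have -> : \sum_(u < m) \sum_(w < m) (b w * (b u * sqnorm (x u)) + b u * (b w * sqnorm (x w))
      - 2 * (b u * (b w * dot (x u) (x w)))) =
   \sum_(u < m) ((\sum_(w < m) b w) * (b u * sqnorm (x u)) + b u * (\sum_(w < m) (b w * sqnorm (x w)))
      - 2 * (\sum_(w < m) b u * (b w * dot (x u) (x w)))).
  apply: eq_bigr => u _; rewrite sumrB big_split /= -mulr_suml -mulr_sumr -mulr_sumr //.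
rewrite sumrB big_split /= -mulr_sumr -mulr_suml -mulr_sumr; ring.
Qed.

End Dot.

Definition blkn (i : nat) : nat :=
  if (i < 3)%N then 0 else if (i < 6)%N then 1 else if (i < 10)%N then 2 else 3.
Definition y0n (i : nat) : int :=
  match blkn i with 0%N => 3 | 1%N => -3 | 2%N => -2 | _ => 2 end.
Definition bdn (u w : nat) : int :=
  if u == w then 0 else (bdist (blkn u) (blkn w))%:Z.

Lemma y0sum : \sum_(i < 14) y0 i = 0.
Proof.
rewrite (_ : \sum_(i < 14) y0 i = \sum_(0 <= i < 14) y0n i); last by rewrite big_mkord.
apply/eqP; rewrite unlock; vm_compute; reflexivity.
Qed.

Lemma y0dist : \sum_(u < 14) \sum_(w < 14) (y0 u * y0 w * bdn u w) = 0.
Proof.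
rewrite (_ : \sum_(u < 14) \sum_(w < 14) (y0 u * y0 w * bdn u w) =
   \sum_(0 <= u < 14) \sum_(0 <= w < 14) (y0n u * y0n w * bdn u w)).
  apply/eqP; rewrite unlock; vm_compute; reflexivity.
rewrite big_mkord; apply: eq_bigr => u _; by rewrite big_mkord.
Qed.

Lemma y0_neq0 i : y0 i != 0.
Proof. by rewrite /y0; case: (blk i) => [|[|[|]]]. Qed.

Lemma y0_cases i : [\/ y0 i = 3, y0 i = -3, y0 i = -2 | y0 i = 2].
Proof. rewrite /y0; case: (blk i) => [|[|[|n]]] /=; by [apply: Or41|apply: Or42|apply: Or43|apply: Or44]. Qed.

Section Gen.
Variable R : realType.

Lemma sum_delta (V : lmodType R) m (i : 'I_m) (x : 'I_m -> V) :
  \sum_(k < m) (k == i)%:R *: x k = x i.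
Proof.
rewrite (bigD1 i) //= eqxx scale1r big1 ?addr0 //.
by move=> k /negbTE ->; rewrite scale0r.
Qed.

Lemma sum_deltaR m (i : 'I_m) (x : 'I_m -> R) :
  \sum_(k < m) (k == i)%:R * x k = x i.
Proof. exact: (@sum_delta R^o). Qed.

Lemma sum_delta1 m (i : 'I_m) : \sum_(k < m) (k == i)%:R = 1 :> R.
Proof. have := sum_deltaR i (fun _ => (1:R)); by under eq_bigr do rewrite mulr1. Qed.

End Gen.

Section Main.
Variable R : realType.
Variable L : 'rV[R]_12 -> Prop.
Variable v : 'I_14 -> 'rV[R]_12.
Hypothesis HL : is_lattice L.
Hypothesis HD : is_delaunay L v.
Hypothesis Hd : forall i j : 'I_14, i != j -> sqnorm (v i - v j) = (bdist (blk i) (blk j))%:R.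

Notation yr i := ((y0 i)%:~R : R).

Lemma y0sumR : \sum_(i < 14) yr i = 0.
Proof. by rewrite -rmorph_sum /= y0sum. Qed.

Lemma sqnorm0 n : sqnorm (0 : 'rV[R]_n) = 0.
Proof. by rewrite /sqnorm big1 // => i _; rewrite mxE expr0n. Qed.

Lemma distE u w : sqnorm (v u - v w) = (bdn u w)%:~R.
Proof.
rewrite /bdn; case: eqP => [/val_inj ->|/eqP ne]; first by rewrite subrr sqnorm0.
by rewrite Hd //.
Qed.

Lemma dep_y0 : \sum_(i < 14) yr i *: v i = 0.
Proof.
apply: sqnorm_eq0.
have := hypid (fun i => yr i) v.
rewrite y0sumR mulr0 mul0r sub0r.
have -> : \sum_(u < 14) \sum_(w < 14) yr u * yr w * sqnorm (v u - v w) = 0.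
  rewrite -[RHS](mulr0z (1:R)) -y0dist rmorph_sum; apply: eq_bigr => u _.
  rewrite rmorph_sum; apply: eq_bigr => w _. by rewrite distE !rmorphM.
move=> /esym /eqP; rewrite oppr_eq0 mulf_eq0 pnatr_eq0 /= => /eqP //.
Qed.

Lemma realdep (a : 'I_14 -> R) :
  \sum_(i < 14) a i = 0 -> \sum_(i < 14) a i *: v i = 0 ->
  exists t, forall i, a i = t * yr i.
Proof.
move=> sa sv.
case: HD => _ [c [r [_ [_ [w Hw]]]]].
have winj : injective w.
  move=> i j eij; apply/eqP; apply/negPn/negP => nij.
  pose a' := fun k : 'I_13 => (k == i)%:R - (k == j)%:R : R.
  have := Hw a'.
  have s1 : \sum_(k < 13) a' k = 0.
    by rewrite /a' sumrB !sum_delta1 subrr.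
  have s2 : \sum_(k < 13) a' k *: v (w k) = 0.
    rewrite /a'; under eq_bigr do rewrite scalerBl.
    by rewrite sumrB !sum_delta eij subrr.
  move=> /(_ s1 s2 i); rewrite /a' eqxx (negbTE nij) subr0 => /eqP; by rewrite oner_eq0.
pose Im := [set w j | j in [set: 'I_13]].
have cIm : #|Im| = 13%N by rewrite card_imset // cardsT card_ord.
have : #|~: Im| == 1%N by have := cardsC Im; rewrite cIm card_ord => /eqP; lia.
case/cards1P => u0 Hu0.
have nIm i : i \notin Im -> i = u0.
  by move=> H; apply/set1P; rewrite -Hu0 inE.
pose t := a u0 / yr u0.
have yu0 : yr u0 != 0 by rewrite intr_eq0 y0_neq0.
pose b := fun i => a i - t * yr i.
have bu0 : b u0 = 0 by rewrite /b /t divfK // subrr.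
have bIm (F : 'I_14 -> 'rV[R]_12) : \sum_(i < 14) b i *: F i = \sum_(j < 13) b (w j) *: F (w j).
  rewrite (bigID (mem Im)) /= [X in _ + X]big1 ?addr0; last first.
    by move=> i /nIm ->; rewrite bu0 scale0r.
  rewrite (big_imset (fun i => b i *: F i)) /=; last by move=> x y _ _; apply: winj.
  by apply: eq_bigl => j; rewrite inE.
have bImR : \sum_(i < 14) b i = \sum_(j < 13) b (w j).
  rewrite (bigID (mem Im)) /= [X in _ + X]big1 ?addr0; last first.
    by move=> i /nIm ->; rewrite bu0.
  rewrite (big_imset (fun i => b i)) /=; last by move=> x y _ _; apply: winj.
  by apply: eq_bigl => j; rewrite inE.
have sb : \sum_(i < 14) b i = 0 by rewrite /b sumrB sa -mulr_sumr y0sumR mulr0 subrr.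
have sbv : \sum_(i < 14) b i *: v i = 0.
  rewrite /b; under eq_bigr do rewrite scalerBl -scalerA.
  by rewrite sumrB sv -scaler_sumr dep_y0 scaler0 subrr.
have H0 := Hw (fun j => b (w j)).
rewrite -bImR -bIm in H0.
have {}H0 := H0 sb sbv.
exists t => i; apply/eqP; rewrite -subr_eq0; apply/eqP.
case: (boolP (i \in Im)) => [/imsetP [j _ ->]|/nIm ->]; last exact: bu0.
exact: H0 j.
Qed.


Lemma intdep (y : 'I_14 -> int) :
  (\sum_(i < 14) (y i)%:~R *: v i = 0 /\ \sum_(i < 14) y i = 0) <->
  (exists k : int, forall i, y i = k * y0 i).
Proof.
split.
  move=> [sv sy].
  have sa : \sum_(i < 14) ((y i)%:~R : R) = 0 by rewrite -rmorph_sum /= sy.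
  have [t Ht] := realdep sa sv.
  exists (y ord0 - y ord_max) => i; apply: (@intr_inj R).
  rewrite Ht rmorphM rmorphB /= !Ht.
  have -> : y0 ord0 = 3 by [].
  have -> : y0 ord_max = 2 by [].
  congr (_ * _); rewrite (_ : (3%:~R : R) = 3) // (_ : (2%:~R : R) = 2) //; ring.
move=> [k Hk]; split.
  under eq_bigr do rewrite Hk rmorphM /= -scalerA.
  by rewrite -scaler_sumr dep_y0 scaler0.
by under eq_bigr do rewrite Hk; rewrite -mulr_sumr y0sum mulr0.
Qed.

Lemma part1 u : K_affine_basis predT v ([set: 'I_14] :\ u).
Proof.
split; last by have := cardsD1 u [set: 'I_14]; rewrite inE cardsT card_ord; lia.
have memW i : (i \in [set: 'I_14] :\ u) = (i != u) by rewrite !inE andbT.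
have yu : yr u != 0 by rewrite intr_eq0 y0_neq0.
move=> j; case: (eqVneq j u) => [->|nju].
  exists (fun i => - yr i / yr u); split => //.
  have E1 : \sum_(i in [set: 'I_14] :\ u) yr i = - yr u.
    have := y0sumR; rewrite (bigD1 u) //= => H.
    rewrite (eq_bigl (fun i => i != u)); last by move=> i; rewrite memW.
    by apply/eqP; rewrite -addr_eq0 addrC H.
  have E2 : \sum_(i in [set: 'I_14] :\ u) yr i *: v i = - (yr u *: v u).
    have := dep_y0; rewrite (bigD1 u) //= => H.
    rewrite (eq_bigl (fun i => i != u)); last by move=> i; rewrite memW.
    by apply/eqP; rewrite -addr_eq0 addrC H.
  split.
    by rewrite -mulr_suml sumrN E1 opprK divff.
  under eq_bigr do rewrite mulNr scaleNr mulrC -scalerA.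
  by rewrite sumrN -scaler_sumr E2 scalerN opprK scalerA mulVf // scale1r.
exists (fun i => (i == j)%:R); split => //.
have jW : j \in [set: 'I_14] :\ u by rewrite memW.
split.
  rewrite (bigD1 j) //= eqxx big1 ?addr0 // => i /andP [_ /negbTE ->] //.
rewrite (bigD1 j) //= eqxx scale1r big1 ?addr0 // => i /andP [_ /negbTE ->].
by rewrite scale0r.
Qed.

Lemma part3 : ~ K_basic (fun x : R => x \is a Num.int) v.
Proof.
move=> [W [gen cW]].
have : #|~: W| == 1%N by have := cardsC W; rewrite cW card_ord => /eqP; lia.
case/cards1P => u Hu.
have memW i : (i \in W) = (i != u).
  by rewrite -[i \in W]negbK -in_setC Hu inE.
have [z [zint [zs zv]]] := gen u.
pose y := fun i => if i == u then -1 else Num.floor (z i).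
have yE i : i != u -> (y i)%:~R = z i.
  by move=> /negbTE niu; rewrite /y niu; apply/eqP; rewrite -intrEfloor; apply: zint.
have sumW (F : 'I_14 -> R) : \sum_(i in W) F i = \sum_(i < 14 | i != u) F i.
  by apply: eq_bigl => i; rewrite memW.
have sumWv (F : 'I_14 -> 'rV[R]_12) : \sum_(i in W) F i = \sum_(i < 14 | i != u) F i.
  by apply: eq_bigl => i; rewrite memW.
have yu : y u = -1 by rewrite /y eqxx.
have sv : \sum_(i < 14) (y i)%:~R *: v i = 0.
  rewrite (bigD1 u) //= yu scaleN1r zv sumWv addrC.
  apply/eqP; rewrite subr_eq0; apply/eqP; apply: eq_bigr => i niu; by rewrite yE.
have sy : \sum_(i < 14) y i = 0.
  apply: (@intr_inj R); rewrite rmorph_sum /= (bigD1 u) //= yu.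
  rewrite (eq_bigr (fun i => z i)); last by move=> i; apply: yE.
  by rewrite -sumW zs rmorph0 /= addrC -[(-1)%:~R]/(-1 : R) subrr.
have [k Hk] := (proj1 (intdep y)) (conj sv sy).
have := Hk u; rewrite yu.
case: (y0_cases u) => ->; lia.
Qed.

End Main.

Section QF.
Variable R : realType.

Definition qf m (x : 'M[R]_m) (b : 'rV[R]_m) : R := (b *m x *m b^T) 0 0.

Lemma qfE m (x : 'M[R]_m) b :
  qf x b = \sum_(u < m) \sum_(w < m) b 0 u * b 0 w * x u w.
Proof.
rewrite /qf mxE; under eq_bigr do rewrite mxE mxE mulr_suml.
rewrite exchange_big /=; apply: eq_bigr => u _; apply: eq_bigr => w _; ring.
Qed.

Lemma qf_shift m (E : 'M[R]_m) (y : 'cV[R]_m) (x : 'rV[R]_m) t :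
  E^T = E -> E *m y = 0 -> qf E (x + t *: y^T) = qf E x.
Proof.
move=> sE Ey; rewrite /qf.
have yE : y^T *m E = 0.
  have := congr1 trmx Ey; rewrite trmx_mul sE trmx0; exact.
rewrite mulmxDl -scalemxAl yE scaler0 addr0.
rewrite linearD /= linearZ /= trmxK mulmxDr -scalemxAr -!mulmxA Ey mulmx0 scaler0 addr0 //.
Qed.

Lemma qf_lin m (x y : 'M[R]_m) (s t : R) b :
  qf (s *: x + t *: y) b = s * qf x b + t * qf y b.
Proof.
rewrite /qf mulmxDr mulmxDl -!scalemxAr -!scalemxAl !mxE //.
Qed.

Lemma qf_bound m (A : 'M[R]_m) (z : 'rV[R]_m) :
  `|qf A z| <= (\sum_(i < m) \sum_(j < m) `|A i j|) * sqnorm z.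
Proof.
rewrite qfE; apply: (le_trans (ler_norm_sum _ _ _)).
rewrite mulr_suml; apply: ler_sum => i _.
apply: (le_trans (ler_norm_sum _ _ _)).
rewrite mulr_suml; apply: ler_sum => j _.
have zi : z 0 i ^+ 2 <= sqnorm z.
  rewrite /sqnorm (bigD1 i) //= lerDl; apply: sumr_ge0 => k _; exact: sqr_ge0.
have zj : z 0 j ^+ 2 <= sqnorm z.
  rewrite /sqnorm (bigD1 j) //= lerDl; apply: sumr_ge0 => k _; exact: sqr_ge0.
rewrite normrM [`|A i j| * _]mulrC; apply: ler_wpM2r => //.
rewrite normrM.
have h1 := sqr_ge0 (`|z 0 i| - `|z 0 j|).
have e1 : `|z 0 i| ^+ 2 = z 0 i ^+ 2 by rewrite real_normK ?num_real.
have e2 : `|z 0 j| ^+ 2 = z 0 j ^+ 2 by rewrite real_normK ?num_real.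
nra.
Qed.

Lemma min_face_mid (V : lmodType R) (C : V -> Prop) p x y :
  C x -> C y -> p = 2^-1 *: x + (1 - 2^-1) *: y -> min_face C p x.
Proof.
move=> Cx Cy Hp F [_ [_ ext]] Fp.
have t0 : 0 < (2^-1 : R) < 1.
  apply/andP; split; first by rewrite invr_gt0.
  by rewrite invf_lt1 // ltr1n.
have H : F (2^-1 *: x + (1 - 2^-1) *: y) by rewrite -Hp.
by case: (ext x y _ Cx Cy t0 H).
Qed.

End QF.

Definition np : seq (nat*nat) :=
  [seq pq <- allpairs pair (iota 1 13) (iota 1 13) | (pq.1 < pq.2)%N && (pq != (1,2)%N)].
Lemma size_np : size np = 77%N. Proof. by []. Qed.
Lemma uniq_np : uniq np. Proof. by []. Qed.
Definition cnd (p q : nat) := [&& 0 < p, p < q, q < 14 & ~~ ((p == 1) && (q == 2))]%N.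
Lemma np_all : all (fun p => all (fun q => ((p,q) \in np) == cnd p q) (iota 0 14)) (iota 0 14).
Proof. by []. Qed.

Lemma iota14 (p : nat) : (p < 14)%N -> p \in iota 0 14.
Proof. by rewrite mem_iota. Qed.

Lemma np_mem (i j : 'I_14) : ((val i, val j) \in np) = cnd i j.
Proof.
have /allP H := np_all.
have /allP := H (val i) (iota14 (ltn_ord i)).
by move=> /(_ (val j) (iota14 (ltn_ord j))) /eqP.
Qed.

Lemma np_mem_nat pq : pq \in np -> cnd pq.1 pq.2.
Proof.
case: pq => p q H.
have /allP A := np_all.
have hp : (p < 14)%N.
  move: H; rewrite mem_filter => /andP [_ /allpairsP [[a b] [ha hb [-> _]]]].
  by move: ha; rewrite mem_iota /=; lia.
have hq : (q < 14)%N.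
  move: H; rewrite mem_filter => /andP [_ /allpairsP [[a b] [ha hb [_ ->]]]].
  by move: hb; rewrite mem_iota /=; lia.
have /allP := A p (iota14 hp).
by move=> /(_ q (iota14 hq)) /eqP <-.
Qed.

Definition prn (l : 'I_77) : nat * nat := nth (0,0)%N np l.
Definition pr1 (l : 'I_77) : 'I_14 := inord (prn l).1.
Definition pr2 (l : 'I_77) : 'I_14 := inord (prn l).2.

Lemma prn_np l : prn l \in np.
Proof. by apply: mem_nth; rewrite size_np. Qed.

Lemma prn_cnd l : cnd (prn l).1 (prn l).2.
Proof. exact: np_mem_nat (prn_np l). Qed.

Lemma pr1E l : nat_of_ord (pr1 l) = (prn l).1.
Proof. rewrite /pr1 inordK //; have := prn_cnd l; rewrite /cnd; lia. Qed.
Lemma pr2E l : nat_of_ord (pr2 l) = (prn l).2.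
Proof. rewrite /pr2 inordK //; have := prn_cnd l; rewrite /cnd; lia. Qed.

Lemma pr_cnd l : cnd (pr1 l) (pr2 l).
Proof. rewrite pr1E pr2E; exact: prn_cnd. Qed.

Lemma pr_inj l l' : pr1 l = pr1 l' -> pr2 l = pr2 l' -> l = l'.
Proof.
move=> /(congr1 (@nat_of_ord 14)) e1 /(congr1 (@nat_of_ord 14)) e2; rewrite !pr1E !pr2E in e1 e2.
have e : prn l = prn l' by move: e1 e2; case: (prn l) => a b; case: (prn l') => c d /= -> ->.
apply: val_inj => /=; apply/eqP; rewrite -(nth_uniq (0,0)%N _ _ uniq_np) ?size_np //; exact/eqP.
Qed.

Lemma pr_surj (i j : 'I_14) : cnd i j -> exists l, pr1 l = i /\ pr2 l = j.
Proof.
rewrite -np_mem => H.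
have hl : (index (val i, val j) np < 77)%N by rewrite -size_np index_mem.
exists (Ordinal hl); split; apply: val_inj.
  by rewrite /= pr1E /prn /= nth_index.
by rewrite /= pr2E /prn /= nth_index.
Qed.

Lemma neq_val n (i j : 'I_n) : i != j -> (nat_of_ord i != nat_of_ord j)%N.
Proof. by []. Qed.

Notation o0 := (@Ordinal 14 0 isT).
Notation o1 := (@Ordinal 14 1 isT).
Notation o2 := (@Ordinal 14 2 isT).

Definition offp (i j : 'I_14) : Prop :=
  (nat_of_ord i = nat_of_ord j) \/
  ((0 < i)%N /\ (0 < j)%N /\ ~ (nat_of_ord i = 1%N /\ nat_of_ord j = 2%N) /\
      ~ (nat_of_ord i = 2%N /\ nat_of_ord j = 1%N)).

Section Piv.
Variable R : realType.
Notation yr i := ((y0 i)%:~R : R).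

Lemma offpiv_zero (X : 'M[R]_14) : X^T = X -> (forall i, X i i = 0) ->
  (forall l, X (pr1 l) (pr2 l) = 0) -> forall i j, offp i j -> X i j = 0.
Proof.
move=> sX dX pX i j [/val_inj -> | [h1 [h2 [h3 h4]]]]; first exact: dX.
have symX (a b : 'I_14) : X a b = X b a by rewrite -{1}sX mxE.
have main (a b : 'I_14) : (0 < a)%N -> (a < b)%N -> ~ (nat_of_ord a = 1%N /\ nat_of_ord b = 2%N) -> X a b = 0.
  move=> ha hab hn.
  have [l [<- <-]] : exists l, pr1 l = a /\ pr2 l = b.
    apply: pr_surj; rewrite /cnd ha hab ltn_ord /=; apply/negP => /andP [/eqP ? /eqP ?]; tauto.
  exact: pX.
case: (ltngtP i j) => [lt|gt|eq].
- exact: main.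
- rewrite symX; apply: main => //; tauto.
- by move: eq => /val_inj ->; exact: dX.
Qed.

Lemma uniq_zero (X : 'M[R]_14) : X^T = X -> (forall i, X i i = 0) ->
  (forall u, \sum_(w < 14) X u w * yr w = 0) ->
  (forall l, X (pr1 l) (pr2 l) = 0) -> X = 0.
Proof.
move=> sX dX rX pX.
have Z := offpiv_zero sX dX pX.
have symX (a b : 'I_14) : X a b = X b a by rewrite -{1}sX mxE.
have y00 : yr o0 = 3 by [].
have y01 : yr o1 = 3 by [].
have y02 : yr o2 = 3 by [].
have Rk (u : 'I_14) : (3 <= u)%N -> X u o0 = 0.
  move=> hu; have := rX u; rewrite (bigD1 o0) //= big1 ?addr0.
    by rewrite y00 => /eqP; rewrite mulf_eq0 pnatr_eq0 orbF => /eqP.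
  move=> w /neq_val /= hw; rewrite Z ?mul0r //; rewrite /offp /=; lia.
have R1 : X o1 o0 * 3 + X o1 o2 * 3 = 0.
  have := rX o1; rewrite (bigD1 o0) //= (bigD1 o2) //= big1 ?addr0 ?y00 ?y02 ?addrA //.
  move=> w /andP [/neq_val /= hw0 /neq_val /= hw2]; rewrite Z ?mul0r //; rewrite /offp /=; lia.
have R2 : X o2 o0 * 3 + X o2 o1 * 3 = 0.
  have := rX o2; rewrite (bigD1 o0) //= (bigD1 o1) //= big1 ?addr0 ?y00 ?y01 ?addrA //.
  move=> w /andP [/neq_val /= hw0 /neq_val /= hw2]; rewrite Z ?mul0r //; rewrite /offp /=; lia.
have R0 : X o0 o1 * 3 + X o0 o2 * 3 = 0.
  have := rX o0; rewrite (bigD1 o1) //= (bigD1 o2) //= big1 ?addr0 ?y01 ?y02 ?addrA //.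
  move=> w /andP [/neq_val /= hw1 /neq_val /= hw2].
  case: (eqVneq w o0) => [->|/neq_val /= hw0]; first by rewrite dX mul0r.
  by rewrite symX Rk ?mul0r //; lia.
have e10 := symX o1 o0. have e20 := symX o2 o0. have e21 := symX o2 o1.
have X01 : X o0 o1 = 0 by lra.
have X02 : X o0 o2 = 0 by lra.
have X12 : X o1 o2 = 0 by lra.
apply/matrixP => i j; rewrite mxE.
have [i0|ipos] := posnP i; have [j0|jpos] := posnP j.
- by rewrite (_ : i = j) ?dX //; apply: val_inj => /=; rewrite i0 j0.
- rewrite (_ : i = o0); last by apply: val_inj.
  case: (ltngtP j 2) => [j1|j3|j2].
  + by rewrite (_ : j = o1) //; apply: val_inj => /=; lia.
  + by rewrite symX Rk.
  + by rewrite (_ : j = o2) //; apply: val_inj.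
- rewrite (_ : j = o0); last by apply: val_inj.
  case: (ltngtP i 2) => [i1|i3|i2].
  + by rewrite (_ : i = o1) ?e10 //; apply: val_inj => /=; lia.
  + by rewrite Rk.
  + by rewrite (_ : i = o2) ?e20 //; apply: val_inj.
- case: (boolP ((nat_of_ord i == 1%N) && (nat_of_ord j == 2%N))) => [/andP [/eqP i1 /eqP j2]|n12].
    have -> : i = o1 by apply: val_inj.
    by have -> : j = o2 by apply: val_inj.
  case: (boolP ((nat_of_ord i == 2%N) && (nat_of_ord j == 1%N))) => [/andP [/eqP i1 /eqP j2]|n21].
    have -> : i = o2 by apply: val_inj.
    have -> : j = o1 by apply: val_inj.
    by rewrite e21.
  apply: Z; rewrite /offp; right; do 2!split => //; split.
    by move=> [/eqP a /eqP b]; move: n12; rewrite a b.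
  by move=> [/eqP a /eqP b]; move: n21; rewrite a b.
Qed.

Definition sS (t : 'I_14 -> R) : R :=
  (t o0 - \sum_(w < 14 | (3 <= w)%N) yr w * t w / 3) / 3.
Definition sT (t : 'I_14 -> R) : R := (sS t + t o1 / 3 + t o2 / 3) / 2.
Definition solv (t : 'I_14 -> R) (i j : 'I_14) : R :=
  if i == j then 0 else
  if (minn i j == 0)%N then
    (if (maxn i j == 1)%N then sT t - t o2 / 3
     else if (maxn i j == 2)%N then sT t - t o1 / 3
     else t (if (i < j)%N then j else i) / 3)
  else if (minn i j == 1)%N && (maxn i j == 2)%N then sT t - sS t else 0.
Definition sol (t : 'I_14 -> R) : 'M[R]_14 := \matrix_(i, j) solv t i j.

Lemma yrO0 (p : (0 < 14)%N) : yr (Ordinal p) = 3. Proof. by []. Qed.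
Lemma yrO1 (p : (1 < 14)%N) : yr (Ordinal p) = 3. Proof. by []. Qed.
Lemma yrO2 (p : (2 < 14)%N) : yr (Ordinal p) = 3. Proof. by []. Qed.

Lemma intr3 : (((3%:R : int))%:~R : R) = 3. Proof. by []. Qed.

Lemma sol_diag t i : sol t i i = 0.
Proof. by rewrite mxE /solv eqxx. Qed.

Lemma sol_sym t : (sol t)^T = sol t.
Proof.
apply/matrixP => i j; rewrite !mxE /solv eq_sym minnC maxnC.
case: (ltngtP i j) => [h|h|/val_inj ->]; last by rewrite eqxx.
- by [].
- by [].
Qed.

Lemma sol_off t i j : offp i j -> sol t i j = 0.
Proof.
rewrite mxE /solv => H.
case: eqP => // /eqP nij.
have nij' : (nat_of_ord i != nat_of_ord j) := nij.
have -> : (minn i j == 0)%N = false by rewrite /offp in H; lia.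
have -> : ((minn i j == 1)%N && (maxn i j == 2)%N) = false by rewrite /offp in H; lia.
by [].
Qed.

Lemma sol_row t u : \sum_(w < 14) sol t u w * yr w = t u.
Proof.
have y00 : yr o0 = 3 by [].
have y01 : yr o1 = 3 by [].
have y02 : yr o2 = 3 by [].
case: (ltnP u 3) => hu; last first.
  rewrite (bigD1 o0) //= big1 ?addr0.
    rewrite y00 mxE /solv.
    have -> : (u == o0) = false by apply/negbTE; rewrite -(inj_eq val_inj) /=; lia.
    have -> : (minn u 0 == 0)%N = true by lia.
    have -> : (maxn u 0 == 1)%N = false by lia.
    have -> : (maxn u 0 == 2)%N = false by lia.
    have -> : (u < 0)%N = false by lia.
    by field.
  move=> w /neq_val /= hw; rewrite sol_off ?mul0r // /offp /=; lia.
have [u0|u1|u2] : [\/ u = o0, u = o1 | u = o2].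
- case: (ltngtP u 1) => h.
  + by apply: Or31; apply: val_inj => /=; lia.
  + by apply: Or33; apply: val_inj => /=; lia.
  + by apply: Or32; apply: val_inj => /=; lia.
- subst u.
  have E : \sum_(w < 14 | (w != o1) && (w != o2)) sol t o0 w * yr w =
           \sum_(w < 14 | (3 <= w)%N) yr w * t w / 3.
    rewrite big_mkcond [RHS]big_mkcond; apply: eq_bigr => w _.
    case: (ltnP w 3) => hw.
      have [->|->|->] : [\/ w = o0, w = o1 | w = o2].
      - case: (ltngtP w 1) => h.
        + by apply: Or31; apply: val_inj => /=; lia.
        + by apply: Or33; apply: val_inj => /=; lia.
        + by apply: Or32; apply: val_inj => /=; lia.
      - by rewrite sol_diag mul0r.
      - by [].
      - by [].
    have -> : (w != o1) && (w != o2) by rewrite -!(inj_eq val_inj) /=; lia.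
    rewrite mxE /solv /=.
    have -> : (o0 == w) = false by apply/negbTE; rewrite -(inj_eq val_inj) /=; lia.
    have -> : (minn 0 w == 0)%N = true by lia.
    have -> : (maxn 0 w == 1)%N = false by lia.
    have -> : (maxn 0 w == 2)%N = false by lia.
    have -> : (0 < w)%N = true by lia.
    by rewrite mulrC mulrA.
  rewrite (bigD1 o1) //= (bigD1 o2) //= E.
  by rewrite !mxE /solv /= /sT /sS /y0 /= !intr3; field.
- subst u; rewrite (bigD1 o0) //= (bigD1 o2) //= big1 ?addr0.
    by rewrite /y0 /= !intr3 !mxE /solv /= /sT; field.
  move=> w /andP [/neq_val /= hw0 /neq_val /= hw2]; rewrite sol_off ?mul0r // /offp /=; lia.
- subst u; rewrite (bigD1 o0) //= (bigD1 o1) //= big1 ?addr0.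
    by rewrite /y0 /= !intr3 !mxE /solv /= /sT; field.
  move=> w /andP [/neq_val /= hw0 /neq_val /= hw2]; rewrite sol_off ?mul0r // /offp /=; lia.
Qed.

End Piv.

Section Rank.
Variable R : realType.
Variable L : 'rV[R]_12 -> Prop.
Variable v : 'I_14 -> 'rV[R]_12.
Hypothesis HL : is_lattice L.
Hypothesis HD : is_delaunay L v.
Hypothesis Hd : forall i j : 'I_14, i != j -> sqnorm (v i - v j) = (bdist (blk i) (blk j))%:R.
Variable c : 'rV[R]_12.
Variable r : R.
Hypothesis Hemp : forall a, L a -> r ^+ 2 <= sqnorm (a - c).
Hypothesis Hsph : forall a, (L a /\ sqnorm (a - c) = r ^+ 2) <-> exists i, a = v i.

Notation yr i := ((y0 i)%:~R : R).
Notation d := (dist_mx v).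
Definition brow (b : 'I_14 -> int) : 'rV[R]_14 := \row_i (b i)%:~R.
Definition y0c : 'cV[R]_14 := \col_i yr i.

Lemma vL i : L (v i). Proof. have [_ H] := Hsph (v i); by case: (H (ex_intro _ i erefl)). Qed.
Lemma vS i : sqnorm (v i - c) = r ^+ 2.
Proof. have [_ H] := Hsph (v i); by case: (H (ex_intro _ i erefl)). Qed.

Lemma L_comb (b : 'I_14 -> int) : L (\sum_(i < 14) (b i)%:~R *: v i).
Proof.
case: HL => B [_ HB].
have L0 : L 0 by apply/HB; exists 0; rewrite map_mx0 mul0mx.
have LD x y : L x -> L y -> L (x + y).
  move=> /HB [z1 ->] /HB [z2 ->]; apply/HB; exists (z1 + z2).
  by rewrite -mulmxDl; congr (_ *m _); apply/matrixP => i j; rewrite !mxE rmorphD.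
apply: (big_ind L) => // i _.
move: (vL i) => /HB [z ->]; apply/HB; exists (b i *: z).
rewrite scalemxAl; congr (_ *m _); apply/matrixP => p q; rewrite !mxE rmorphM //.
Qed.

Lemma hypform (x : 'M[R]_14) (b : 'I_14 -> int) :
  \sum_(u < 14) \sum_(w < 14) (b u * b w)%:~R * x u w = qf x (brow b).
Proof.
rewrite qfE; apply: eq_bigr => u _; apply: eq_bigr => w _; by rewrite !mxE rmorphM.
Qed.

Lemma bsum (b : 'I_14 -> int) : \sum_(i < 14) b i = 1 -> \sum_(i < 14) ((b i)%:~R : R) = 1.
Proof. by move=> H; rewrite -rmorph_sum /= H. Qed.

Lemma hv_d (b : 'I_14 -> int) : \sum_(i < 14) b i = 1 ->
  qf d (brow b) = 2 * r ^+ 2 - 2 * sqnorm (\sum_(i < 14) (b i)%:~R *: v i - c).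
Proof.
move=> sb; have sbR := bsum sb.
rewrite qfE.
have := hypid (fun i => ((b i)%:~R : R)) (fun i => v i - c).
have E1 : \sum_(u < 14) ((b u)%:~R : R) * sqnorm (v u - c) = r ^+ 2.
  under eq_bigr do rewrite vS.
  by rewrite -mulr_suml sbR mul1r.
have E2 : \sum_(u < 14) ((b u)%:~R : R) *: (v u - c) = \sum_(i < 14) (b i)%:~R *: v i - c.
  under eq_bigr do rewrite scalerBr.
  by rewrite sumrB -scaler_suml sbR scale1r.
rewrite E1 E2 sbR mulr1 => <-.
apply: eq_bigr => u _; apply: eq_bigr => w _.
by rewrite !mxE opprB addrA subrK.
Qed.

Lemma HYP_d : HYP d.
Proof.
split; first by move=> u w; rewrite !mxE sqnormB sqnormB dotC; congr (_ - _); rewrite addrC.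
split; first by move=> u; rewrite mxE subrr /sqnorm big1 // => i _; rewrite mxE expr0n.
move=> b sb; rewrite hypform hv_d //.
have := Hemp (L_comb b); lra.
Qed.

Definition Mv : 'M[R]_(14, 13) := \matrix_(u, k) (if (k < 12)%N then v u 0 (inord k) else 1).
Definition Nv : 'M[R]_(13, 14) := pinvmx Mv.
Definition KE (E : 'M[R]_14) : R := \sum_(i < 13) \sum_(j < 13) `|(Nv *m E *m Nv^T) i j|.

Lemma sqnorm_Mv (b : 'rV[R]_14) :
  sqnorm (b *m Mv) = sqnorm (\sum_(u < 14) b 0 u *: v u) + (\sum_(u < 14) b 0 u) ^+ 2.
Proof.
rewrite /sqnorm big_ord_recr /=; congr (_ + _).
  apply: eq_bigr => k _; rewrite !mxE summxE; congr (_ ^+ 2); apply: eq_bigr => u _.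
  rewrite !mxE /= ltn_ord; congr (_ * v u 0 _); apply: val_inj => /=; rewrite inordK //.
by rewrite !mxE; congr (_ ^+ 2); apply: eq_bigr => u _; rewrite !mxE /= mulr1.
Qed.

Lemma Mv_dep (a : 'rV[R]_14) : a *m Mv = 0 -> exists t, a = t *: y0c^T.
Proof.
move=> H.
have s1 : \sum_(u < 14) a 0 u = 0.
  have := congr1 (fun m : 'M[R]_(1,13) => m 0 ord_max) H; rewrite !mxE => E0.
  apply: (etrans _ E0); apply: eq_bigr => u _; by rewrite !mxE /= mulr1.
have s2 : \sum_(u < 14) a 0 u *: v u = 0.
  apply/rowP => k; rewrite summxE mxE.
  have := congr1 (fun m : 'M[R]_(1,13) => m 0 (widen_ord (leqnSn 12) k)) H; rewrite !mxE => E0.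
  apply: (etrans _ E0); apply: eq_bigr => u _; rewrite !mxE /= ltn_ord; congr (_ * v u 0 _).
  apply: val_inj => /=; rewrite inordK //; exact: ltn_ord.
have [t Ht] := realdep HD Hd s1 s2.
by exists t; apply/rowP => u; rewrite !mxE Ht.
Qed.

Lemma Kbound (E : 'M[R]_14) : E^T = E -> E *m y0c = 0 -> forall b : 'rV[R]_14,
  `|qf E b| <= KE E * (sqnorm (\sum_(u < 14) b 0 u *: v u) + (\sum_(u < 14) b 0 u) ^+ 2).
Proof.
move=> sE Ey b.
pose z := b *m Mv.
pose b' := z *m Nv.
have hb' : b' *m Mv = z by rewrite /b' /Nv mulmxKpV // submxMl.
have [t Ht] : exists t, b' - b = t *: y0c^T.
  by apply: Mv_dep; rewrite mulmxBl hb' subrr.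
have Eb : b = b' + (- t) *: y0c^T by rewrite scaleNr -Ht opprB addrC subrK.
rewrite {1}Eb qf_shift // -sqnorm_Mv -/z.
have -> : qf E b' = qf (Nv *m E *m Nv^T) z.
  by rewrite /qf /b' trmx_mul !mulmxA.
exact: qf_bound.
Qed.

Definition C1 : R := 2 + 2 * r ^+ 2 + 2 * sqnorm c.
Definition epsE (E : 'M[R]_14) : R := (KE E * C1 + 1)^-1.

Lemma KE_ge0 E : 0 <= KE E.
Proof. by apply: sumr_ge0 => i _; apply: sumr_ge0 => j _. Qed.

Lemma C1_ge0 : 0 <= C1.
Proof. rewrite /C1; have := sqnorm_ge0 c; have := sqr_ge0 r; lra. Qed.

Lemma epsE_gt0 E : 0 < epsE E.
Proof. rewrite /epsE invr_gt0; have := mulr_ge0 (KE_ge0 E) C1_ge0; lra. Qed.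

Lemma epsK E : epsE E * (KE E * C1) <= 1.
Proof.
have h := mulr_ge0 (KE_ge0 E) C1_ge0.
rewrite /epsE mulrC ler_pdivrMr; lra.
Qed.

Lemma qf_delta (E : 'M[R]_14) j : qf E (delta_mx 0 j) = E j j.
Proof.
rewrite qfE.
rewrite (eq_bigr (fun u => (u == j)%:R * \sum_(w < 14) (w == j)%:R * E u w)).
  by rewrite sum_deltaR sum_deltaR.
move=> u _; rewrite mulr_sumr; apply: eq_bigr => w _; rewrite !mxE !eqxx /=; ring.
Qed.

Lemma d_int (b : 'I_14 -> int) : exists n : int, qf d (brow b) = n%:~R.
Proof.
exists (\sum_(u < 14) \sum_(w < 14) b u * b w * bdn u w).
rewrite qfE rmorph_sum; apply: eq_bigr => u _; rewrite rmorph_sum; apply: eq_bigr => w _.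
by rewrite !mxE (distE Hd) !rmorphM.
Qed.

Lemma perturb (E : 'M[R]_14) : E^T = E -> (forall i, E i i = 0) -> E *m y0c = 0 ->
  forall s, `|s| <= epsE E -> HYP (d + s *: E).
Proof.
move=> sE dE Ey s hs.
have [sd [dd hd]] := HYP_d.
split.
  move=> u w; rewrite !mxE; have := sd u w; rewrite !mxE => ->; congr (_ + _ * _); by rewrite -{1}sE mxE.
split; first by move=> u; have := dd u; rewrite !mxE => ->; rewrite dE mulr0 addr0.
move=> b sb; rewrite hypform.
have -> : d + s *: E = 1 *: d + s *: E by rewrite scale1r.
rewrite qf_lin mul1r.
set Q := qf d (brow b); set P := qf E (brow b).
set S := sqnorm (\sum_(i < 14) (b i)%:~R *: v i - c).
have hQ : Q = 2 * r ^+ 2 - 2 * S by rewrite /Q hv_d.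
have hS : r ^+ 2 <= S := Hemp (L_comb b).
have [n Hn] := d_int b; rewrite -/Q in Hn.
case: (eqVneq n 0) => [n0|n0].
  have S0 : S = r ^+ 2 by move: Hn; rewrite n0 hQ /= => H; lra.
  have [j Hj] : exists j, \sum_(i < 14) (b i)%:~R *: v i = v j.
    by apply/Hsph; split => //; apply: L_comb.
  pose y := fun i => b i - (i == j)%:Z.
  have [k Hk] : exists k, forall i, y i = k * y0 i.
    apply/(intdep HD Hd); split.
      rewrite /y; under eq_bigr do rewrite rmorphB scalerBl.
      rewrite sumrB Hj.
      have -> : \sum_(i < 14) ((i == j)%:Z)%:~R *: v i = \sum_(i < 14) (i == j)%:R *: v i.
        by apply: eq_bigr => i _; case: (i == j).
      by rewrite sum_delta subrr.
    rewrite /y sumrB sb.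
    have -> : \sum_(i < 14) ((i == j) : int) = 1.
      by rewrite (bigD1 j) //= eqxx big1 ?addr0 // => i /negbTE ->.
    by rewrite subrr.
  have Eb : brow b = delta_mx 0 j + (k%:~R : R) *: y0c^T.
    apply/rowP => i; rewrite !mxE eqxx /=.
    have := Hk i; rewrite /y => /eqP; rewrite subr_eq => /eqP ->.
    by rewrite rmorphD rmorphM /= addrC; case: (i == j).
  rewrite /P Eb qf_shift // qf_delta dE mulr0 addr0 Hn n0 //.
have nle : n <= -1.
  have : Q <= 0 by rewrite hQ; lra.
  rewrite Hn lerz0 => hn; move: n0; lia.
have Qle : Q <= -1.
  rewrite Hn (_ : (-1 : R) = (-1 : int)%:~R) ?ler_int //.
have hP : `|P| <= KE E * (sqnorm (\sum_(i < 14) (b i)%:~R *: v i) + 1).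
  have := Kbound sE Ey (brow b).
  have -> : \sum_(u < 14) brow b 0 u = 1 by rewrite -(bsum sb); apply: eq_bigr => u _; rewrite mxE.
  have -> : \sum_(u < 14) brow b 0 u *: v u = \sum_(i < 14) (b i)%:~R *: v i.
    by apply: eq_bigr => u _; rewrite mxE.
  by rewrite expr1n.
have hN : sqnorm (\sum_(i < 14) (b i)%:~R *: v i) <= 2 * S + 2 * sqnorm c.
  have := sqnormD_le (\sum_(i < 14) (b i)%:~R *: v i - c) c; by rewrite subrK.
have hK := KE_ge0 E.
have hc := sqnorm_ge0 c.
have hr := sqr_ge0 r.
have hP2 : `|P| <= KE E * (C1 * (- Q)).
  apply: (le_trans hP); apply: ler_wpM2l => //.
  rewrite /C1; nra.
have hsP : s * P <= `|s| * `|P| by rewrite -normrM ler_norm.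
have e0 := epsE_gt0 E.
have hsP2 : `|s| * `|P| <= epsE E * (KE E * (C1 * (- Q))).
  by apply: ler_pM => //; exact: normr_ge0.
have := epsK E.
have hQ0 : 0 <= - Q by lra.
move=> hK1.
have : epsE E * (KE E * (C1 * (- Q))) <= - Q.
  rewrite mulrA mulrA -[X in _ <= X]mul1r; apply: ler_wpM2r => //; by rewrite -mulrA.
lra.
Qed.

Definition Ul (l : 'I_77) : 'M[R]_14 :=
  \matrix_(i, j) ((((i == pr1 l) && (j == pr2 l)) || ((j == pr1 l) && (i == pr2 l))))%:R.
Definition El (l : 'I_77) : 'M[R]_14 :=
  Ul l - sol (fun u => \sum_(w < 14) Ul l u w * yr w).

Lemma ElE l i j : El l i j = Ul l i j - sol (fun u => \sum_(w < 14) Ul l u w * yr w) i j.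
Proof. by rewrite /El !mxE. Qed.

Lemma UlE l i j : Ul l i j =
  ((((i == pr1 l) && (j == pr2 l)) || ((j == pr1 l) && (i == pr2 l))))%:R.
Proof. by rewrite mxE. Qed.

Lemma pr_lt l : (pr1 l < pr2 l)%N.
Proof. by have := pr_cnd l; rewrite /cnd => /and4P []. Qed.

Lemma El_sym l : (El l)^T = El l.
Proof.
rewrite /El linearB /= sol_sym; congr (_ - _).
by apply/matrixP => i j; rewrite !mxE orbC.
Qed.

Lemma El_diag l i : El l i i = 0.
Proof.
rewrite ElE UlE sol_diag subr0 orbb.
case: (boolP ((i == pr1 l) && (i == pr2 l))) => // /andP [/eqP e1 /eqP e2].
by have := pr_lt l; rewrite -e1 -e2 ltnn.
Qed.

Lemma El_y0 l : El l *m y0c = 0.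
Proof.
apply/colP => u; rewrite !mxE.
under eq_bigr do rewrite ElE mxE.
rewrite (eq_bigr (fun w => Ul l u w * yr w - sol (fun u => \sum_(w < 14) Ul l u w * yr w) u w * yr w)).
  by rewrite sumrB sol_row subrr.
by move=> w _; rewrite [y0c _ _]mxE mulrBl UlE.
Qed.

Lemma El_pr l l' : El l (pr1 l') (pr2 l') = (l' == l)%:R.
Proof.
rewrite ElE UlE sol_off ?subr0; last first.
  have := pr_cnd l'; rewrite /cnd /offp; move=> /and4P [h1 h2 h3 /negP h4].
  right; split; first done. split; first by lia.
  split; first by move=> [a b]; apply: h4; rewrite a b.
  by lia.
case: (eqVneq l' l) => [->|ne].
  by rewrite !eqxx.
case: (boolP ((pr1 l' == pr1 l) && (pr2 l' == pr2 l))) => [/andP [/eqP a /eqP b]|_].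
  by move: ne; rewrite (pr_inj a b) eqxx.
case: (boolP ((pr2 l' == pr1 l) && (pr1 l' == pr2 l))) => [/andP [/eqP a /eqP b]|_] //.
have := pr_lt l; have := pr_lt l'; rewrite a b; lia.
Qed.

Lemma El_min_face l : min_face (@HYP R 14) d (d + epsE (El l) *: El l).
Proof.
apply: (@min_face_mid _ _ _ _ _ (d + (- epsE (El l)) *: El l)).
- apply: perturb; [exact: El_sym|exact: El_diag|exact: El_y0|].
  by rewrite ger0_norm // ltW // epsE_gt0.
- apply: perturb; [exact: El_sym|exact: El_diag|exact: El_y0|].
  by rewrite normrN ger0_norm // ltW // epsE_gt0.
- by apply/matrixP => i j; rewrite !mxE; field.
Qed.

Lemma entry_sc (a e : R) (D E : 'M[R]_14) p q :
  (a *: (D + e *: E)) p q = a * (D p q + e * E p q).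
Proof. by rewrite !mxE. Qed.
Lemma entry_s (a : R) (D : 'M[R]_14) p q : (a *: D) p q = a * D p q.
Proof. by rewrite !mxE. Qed.

Definition wlo (i : 'I_78) : 'M[R]_14 :=
  if unlift ord0 i is Some l then d + epsE (El l) *: El l else d.

Lemma lower : exists w : 'I_78 -> 'M[R]_14,
  (forall i, min_face (@HYP R 14) d (w i)) /\ aff_indep w.
Proof.
exists wlo; split.
  move=> i; rewrite /wlo; case: (unliftP ord0 i) => [l _|_].
    exact: El_min_face.
  by move=> F _.
move=> a sa sv.
have sa' := sa; rewrite big_ord_recl in sa'.
have al l : a (lift ord0 l) = 0.
  have := congr1 (fun m : 'M[R]_14 => m (pr1 l) (pr2 l)) sv.
  rewrite /= summxE big_ord_recl [X in _ = X]mxE.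
  rewrite (eq_bigr (fun l' => a (lift ord0 l') * d (pr1 l) (pr2 l) +
               (l' == l)%:R * (a (lift ord0 l') * epsE (El l')))); last first.
    move=> l' _; rewrite /wlo liftK entry_sc El_pr eq_sym; ring.
  rewrite big_split /= -mulr_suml sum_deltaR /wlo unlift_none entry_s.
  rewrite addrA -mulrDl sa' mul0r add0r => /eqP; rewrite mulf_eq0.
  have := epsE_gt0 (El l); rewrite lt0r => /andP [/negbTE -> _].
  by rewrite orbF => /eqP.
have a0 : a ord0 = 0.
  by move: sa'; rewrite big1 ?addr0 // => l _; exact: al.
move=> i; case: (unliftP ord0 i) => [l ->|->] //; exact: al.
Qed.

Definition bj (j : 'I_14) (sg : bool) : 'I_14 -> int :=
  fun i => (i == j)%:Z + (if sg then y0 i else - y0 i).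

Lemma bj_sum j sg : \sum_(i < 14) bj j sg i = 1.
Proof.
rewrite /bj big_split /=.
have -> : \sum_(i < 14) ((i == j) : int) = 1.
  by rewrite (bigD1 j) //= eqxx big1 ?addr0 // => i /negbTE ->.
case: sg; first by rewrite y0sum addr0.
by rewrite sumrN y0sum oppr0 addr0.
Qed.

Lemma bj_v j sg : \sum_(i < 14) (bj j sg i)%:~R *: v i = v j.
Proof.
rewrite /bj; under eq_bigr do rewrite rmorphD scalerDl.
rewrite big_split /=.
have -> : \sum_(i < 14) ((i == j)%:Z)%:~R *: v i = \sum_(i < 14) (i == j)%:R *: v i.
  by apply: eq_bigr => i _; case: (i == j).
rewrite sum_delta; case: sg.
  by rewrite (dep_y0 Hd) addr0.
under eq_bigr do rewrite rmorphN scaleNr.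
by rewrite sumrN (dep_y0 Hd) oppr0 addr0.
Qed.

Lemma brow_bj j sg : brow (bj j sg) = delta_mx 0 j + (if sg then y0c^T else - y0c^T).
Proof.
apply/rowP => i; rewrite !mxE /bj eqxx /= rmorphD; case: sg; rewrite !mxE //.
by rewrite rmorphN.
Qed.

Definition Fset (x : 'M[R]_14) : Prop :=
  HYP x /\ forall j sg, qf x (brow (bj j sg)) = 0.

Lemma Fset_d : Fset d.
Proof.
split; first exact: HYP_d.
by move=> j sg; rewrite hv_d ?bj_sum // bj_v vS subrr.
Qed.

Lemma HYP_conv (x y : 'M[R]_14) t : HYP x -> HYP y -> 0 <= t <= 1 ->
  HYP (t *: x + (1 - t) *: y).
Proof.
move=> [sx [dx hx]] [sy [dy hy]] /andP [t0 t1].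
split; first by move=> u w; rewrite !mxE sx sy.
split; first by move=> u; rewrite !mxE dx dy !mulr0 addr0.
move=> b sb; rewrite hypform qf_lin.
have := hx b sb; have := hy b sb; rewrite !hypform => h1 h2.
nra.
Qed.

Lemma face_F : is_face (@HYP R 14) Fset.
Proof.
split.
  move=> x y t [Hx Fx] [Hy Fy] ht; split; first exact: HYP_conv.
  by move=> j sg; rewrite qf_lin Fx Fy !mulr0 addr0.
split; first by move=> x [].
move=> x y t Hx Hy /andP [t0 t1] [_ Fm].
have key j sg : qf x (brow (bj j sg)) = 0 /\ qf y (brow (bj j sg)) = 0.
  have := Fm j sg; rewrite qf_lin.
  have := Hx.2.2 (bj j sg) (bj_sum j sg); have := Hy.2.2 (bj j sg) (bj_sum j sg).
  rewrite !hypform => h1 h2 h3.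
  split; nra.
split; split => // j sg; by have [] := key j sg.
Qed.

Definition bf (x : 'M[R]_14) (p q : 'rV[R]_14) : R := (p *m x *m q^T) 0 0.
Lemma bfDl x p p' q : bf x (p + p') q = bf x p q + bf x p' q.
Proof. by rewrite /bf !mulmxDl mxE. Qed.
Lemma bfNl x p q : bf x (- p) q = - bf x p q.
Proof. by rewrite /bf !mulNmx mxE. Qed.
Lemma bfDr x p q q' : bf x p (q + q') = bf x p q + bf x p q'.
Proof. by rewrite /bf linearD /= mulmxDr mxE. Qed.
Lemma bfNr x p q : bf x p (- q) = - bf x p q.
Proof. by rewrite /bf linearN /= mulmxN mxE. Qed.
Lemma bfC x p q : x^T = x -> bf x p q = bf x q p.
Proof.
move=> sx; rewrite /bf.
have -> : q *m x *m p^T = (p *m x *m q^T)^T by rewrite !trmx_mul trmxK sx mulmxA.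
by rewrite [RHS]mxE.
Qed.

Lemma qf_pm (x : 'M[R]_14) (a b : 'rV[R]_14) : x^T = x ->
  qf x (a + b) - qf x (a - b) = 4 * (a *m x *m b^T) 0 0.
Proof.
move=> sx.
have -> : qf x (a + b) = bf x (a + b) (a + b) by [].
have -> : qf x (a - b) = bf x (a - b) (a - b) by [].
have -> : (a *m x *m b^T) 0 0 = bf x a b by [].
rewrite !bfDl !bfDr !bfNl !bfNr (bfC a b sx); ring.
Qed.

Lemma Fset_props x : Fset x ->
  [/\ x^T = x, forall i, x i i = 0 & forall u, \sum_(w < 14) x u w * yr w = 0].
Proof.
move=> [[sx [dx _]] Fx].
have sxT : x^T = x by apply/matrixP => i j; rewrite mxE sx.
split => // u.
have := qf_pm (delta_mx 0 u) (y0c^T) sxT.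
rewrite -[delta_mx 0 u + y0c^T](brow_bj u true) -[delta_mx 0 u - y0c^T](brow_bj u false).
rewrite !Fx subrr trmxK => /esym /eqP; rewrite mulf_eq0 pnatr_eq0 /= => /eqP.
move=> E0; apply: (etrans _ E0); rewrite [RHS]mxE; apply: eq_bigr => w _.
rewrite [y0c _ _]mxE [(_ *m x) _ _]mxE; congr (_ * _).
rewrite (eq_bigr (fun k => (k == u)%:R * x k w)) ?sum_deltaR // => k _.
by rewrite mxE eqxx.
Qed.

Lemma upper : ~ exists w : 'I_79 -> 'M[R]_14,
  (forall i, min_face (@HYP R 14) d (w i)) /\ aff_indep w.
Proof.
move=> [w [Hw Hai]].
have Fw i : Fset (w i) by apply: Hw; [exact: face_F | exact: Fset_d].
pose D k := w (lift ord0 k) - w ord0.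
pose A : 'M[R]_(78, 77) := \matrix_(k, l) D k (pr1 l) (pr2 l).
have rk : (0 < \rank (kermx A))%N by rewrite mxrank_ker; have := rank_leq_col A; lia.
have [i0 Hi0] : exists i, row i (kermx A) != 0.
  case: (pickP (fun i => row i (kermx A) != 0)) => [i Hi|H]; first by exists i.
  have K0 : kermx A = 0.
    apply/row_matrixP => i; rewrite row0; apply/eqP; move: (H i) => /= /negbFE //.
  by move: rk; rewrite K0 mxrank0.
pose a := row i0 (kermx A).
have aA : a *m A = 0 by apply/sub_kermxP; exact: row_sub.
pose X := \sum_(k < 78) a 0 k *: D k.
have XE p q : X p q = \sum_(k < 78) a 0 k * (w (lift ord0 k) p q - w ord0 p q).
  by rewrite summxE; apply: eq_bigr => k _; rewrite !mxE.
have X0 : X = 0.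
  apply: uniq_zero.
  - apply/matrixP => p q; rewrite mxE !XE; apply: eq_bigr => k _.
    by have [s1 _ _] := Fset_props (Fw (lift ord0 k)); have [s0 _ _] := Fset_props (Fw ord0);
       rewrite -{1}s1 -{1}s0 !mxE.
  - move=> p; rewrite XE big1 // => k _.
    have [_ d1 _] := Fset_props (Fw (lift ord0 k)); have [_ d0 _] := Fset_props (Fw ord0).
    by rewrite d1 d0 subrr mulr0.
  - move=> u.
    under eq_bigr do rewrite XE mulr_suml.
    rewrite exchange_big /= big1 // => k _.
    have [_ _ r1] := Fset_props (Fw (lift ord0 k)); have [_ _ r0] := Fset_props (Fw ord0).
    rewrite (eq_bigr (fun i => a 0 k * (w (lift ord0 k) u i * yr i - w ord0 u i * yr i))).
      by rewrite -mulr_sumr sumrB r1 r0 subrr mulr0.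
    by move=> i _; rewrite -mulrA mulrBl.
  - move=> l; have := congr1 (fun m : 'M[R]_(1, 77) => m 0 l) aA.
    rewrite /= [X in _ = X]mxE mxE => E0.
    apply: (etrans _ E0); rewrite XE; apply: eq_bigr => k _.
    by rewrite !mxE.
pose al := fun i : 'I_79 => if unlift ord0 i is Some k then a 0 k else - \sum_(k < 78) a 0 k.
have s1 : \sum_(i < 79) al i = 0.
  rewrite big_ord_recl /al unlift_none.
  rewrite [X in _ + X](eq_bigr (fun k => a 0 k)) ?addNr //.
  move=> k _; case: unliftP => [j /lift_inj -> //|].
  by move/eqP; rewrite eq_sym (negbTE (neq_lift _ _)).
have s2 : \sum_(i < 79) al i *: w i = 0.
  rewrite big_ord_recl /al unlift_none.
  rewrite [X in _ + X](eq_bigr (fun k => a 0 k *: w (lift ord0 k))); last first.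
    move=> k _; case: unliftP => [j /lift_inj -> //|].
    by move/eqP; rewrite eq_sym (negbTE (neq_lift _ _)).
  apply: (etrans _ X0); rewrite /X /D; under [X in _ = X]eq_bigr do rewrite scalerBr.
  by rewrite sumrB scaleNr scaler_suml addrC.
have Ha := Hai al s1 s2.
move: Hi0; rewrite -/a; apply/negP; rewrite negbK; apply/eqP/rowP => k.
have := Ha (lift ord0 k); rewrite /al; case: unliftP => [j /lift_inj <-|/eqP]; last by rewrite eq_sym (negbTE (neq_lift _ _)).
by move=> ->; rewrite mxE.
Qed.

Lemma rank77 : delaunay_rank v 77.
Proof. split; [exact: lower | exact: upper]. Qed.

End Rank.

Unset Implicit Arguments.

Theorem mainTheorem3
  (L : 'rV[RR]_12 -> Prop) (v : 'I_14 -> 'rV[RR]_12) :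
  is_lattice L ->
  is_delaunay L v ->
  (forall i j : 'I_14, i != j -> sqnorm (v i - v j) = (bdist (blk i) (blk j))%:R) ->
  [/\ (forall u : 'I_14, K_affine_basis predT v ([set: 'I_14] :\ u)),
      (forall y : 'I_14 -> int,
         (\sum_(i < 14) (y i)%:~R *: v i = 0 /\ \sum_(i < 14) y i = 0) <->
         (exists k : int, forall i, y i = k * y0 i)),
      ~ K_basic (fun x : RR => x \is a Num.int) v
    & delaunay_rank v 77].
Proof.
move=> HL HD Hd.
split.
- move=> u; exact: (part1 Hd u).
- move=> y; exact: (intdep HD Hd y).
- exact: (part3 HD Hd).
- case: (HD) => _ [c [r [Hemp [Hsph _]]]].
  exact: (rank77 HL HD Hd Hemp Hsph).
Qed.
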